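(* Let $a\ge 2$ be even and let $c$ be odd. If $0<c<\frac a2$, then $U=\{(a,-a),(c,-c)\}$ is avoidable. If $c=\frac a2$, then $U=\{(a,-a),(\frac a2,-\frac a2),(0,0)\}$ is avoidable.
   Context: The bicyclic inverse semigroup is $\mathcal{B}=\{(a,b)\in\mathbb{Z}\times\mathbb{Z}\mid a\ge 0,\ a+b\ge 0\}$ with multiplication $(a,b)(c,d)=(\max\{c+d,a\}-d,\ b+d)$. A subset $U\subseteq\mathcal{B}$ is called avoidable if $\mathcal{B}$ can be partitioned into two subsets $A$ and $B$ such that no element of $U$ can be written as a product $xy$ of two distinct elements $x\neq y$ both in $A$, or both in $B$. *)

(* Defs.v *)
From Stdlib Require Import ZArith.
Open Scope Z_scope.

(* Elements of the bicyclic inverse semigroup B = {(a,b) in Z x Z | a >= 0, a+b >= 0}. *)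
Definition inBic (x : Z * Z) : Prop := 0 <= fst x /\ 0 <= fst x + snd x.

Definition bmul (x y : Z * Z) : Z * Z :=
  (Z.max (fst y + snd y) (fst x) - snd y, snd x + snd y).

(* U is avoidable: B can be partitioned into A and B (B = complement of A in the
   semigroup, encoded by a predicate P : "x in A") such that no u in U is a
   product x y of distinct x, y lying in the same part. *)
Definition avoidable (U : Z * Z -> Prop) : Prop :=
  exists P : Z * Z -> Prop,
    forall x y : Z * Z, inBic x -> inBic y -> x <> y ->
      (P x <-> P y) -> ~ U (bmul x y).

(* Main.v *)
Require Import Defs.
From Stdlib Require Import ZArith Lia.
Open Scope Z_scope.

Lemma skel (a : Z) (N : Z -> Prop) (h : Z -> Prop)
 (HA : forall n p q, N n -> 0 <= p -> 0 <= q -> p + q = n -> p <> q -> ~ (h p <-> h q))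
 (HB : forall n p, N n -> 1 <= p -> (h p <-> h (p + a - n))) :
 forall U : Z*Z -> Prop, (forall u, U u -> exists n, N n /\ u = (n, -n)) -> avoidable U.
Proof.
 intros U HU.
 exists (fun x => (fst x + snd x = 0 /\ h (fst x)) \/ (fst x + snd x <> 0 /\ ~ h (a + snd x))).
 intros [x1 x2] [y1 y2] Hx Hy Hne Hiff HUm.
 destruct (HU _ HUm) as [n [Hn Heq]].
 unfold inBic, bmul in *; simpl in *.
 injection Heq as E1 E2.
 assert (Hm: Z.max (y1+y2) x1 = x1 /\ x1 + x2 = 0 /\ y1 + y2 <= x1) by lia.
 destruct Hm as [Hm1 [Hm2 Hm3]].
 assert (PX: (x1 + x2 = 0 /\ h x1 \/ x1 + x2 <> 0 /\ ~ h (a + x2)) <-> h x1)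
   by (split; [intros [[_ ?]|[? _]]; [assumption|lia] | intro; left; split; assumption]).
 destruct (Z.eq_dec (y1+y2) 0) as [H0|H0].
 - apply (HA n x1 y1 Hn); try lia.
   + intro E. apply Hne. f_equal; lia.
   + assert (PY: (y1 + y2 = 0 /\ h y1 \/ y1 + y2 <> 0 /\ ~ h (a + y2)) <-> h y1)
       by (split; [intros [[_ ?]|[? _]]; [assumption|lia] | intro; left; split; assumption]).
     rewrite PX, PY in Hiff; exact Hiff.
 - assert (PY: (y1 + y2 = 0 /\ h y1 \/ y1 + y2 <> 0 /\ ~ h (a + y2)) <-> ~ h (a + y2))
       by (split; [intros [[? _]|[_ ?]]; [lia|assumption] | intro; right; split; assumption]).
   rewrite PX, PY in Hiff.
   assert (HB' := HB n x1 Hn ltac:(lia)).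
   replace (x1 + a - n) with (a + y2) in HB' by lia.
   tauto.
Qed.

Lemma mod_nz w d : 0 < d -> -d < w < d -> w <> 0 -> w mod d <> 0.
Proof.
 intros Hd Hw Hw0 H. apply Z.mod_divide in H; [|lia].
 destruct H as [k ->].
 destruct (Z.lt_trichotomy k 0) as [Hk|[Hk|Hk]]; nia.
Qed.

Lemma opp1 d e f w z t : d = 2*e - (2*f+1) -> 0 < d -> w mod d <> 0 -> z = -w + t*d ->
  ~ ((1 <= w mod d <= e-f-1) <-> (1 <= z mod d <= e-f-1)).
Proof.
 intros Hd Hd0 Hw Hz. subst z. rewrite Z_mod_plus_full.
 rewrite Z_mod_nz_opp_full by assumption.
 pose proof (Z.mod_pos_bound w d Hd0). lia.
Qed.

Lemma opp2 e f p q t : e = 2*f+1 -> 0 < e -> 1 <= p -> 1 <= q -> p mod e <> 0 -> q = -p + t*e ->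
  ~ ((p = 0 \/ 1 <= p mod e <= f) <-> (q = 0 \/ 1 <= q mod e <= f)).
Proof.
 intros He He0 Hp Hq Hw Hz. subst q. rewrite Z_mod_plus_full.
 rewrite Z_mod_nz_opp_full by assumption.
 pose proof (Z.mod_pos_bound p e He0). lia.
Qed.

Theorem proposition3p6 (a c : Z) :
  2 <= a -> Z.Even a -> Z.Odd c ->
  (0 < c < a / 2 ->
     avoidable (fun u => u = (a, -a) \/ u = (c, -c))) /\
  (c = a / 2 ->
     avoidable (fun u => u = (a, -a) \/ u = (a / 2, - (a / 2)) \/ u = (0, 0))).
Proof.
 intros Ha [e He] [f Hf]. subst a c.
 assert (E2: 2*e/2 = e) by (rewrite Z.mul_comm; apply Z.div_mul; lia).
 rewrite E2. split.
 - intros [Hc1 Hc2].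
   apply (skel (2*e) (fun n => n = 2*e \/ n = 2*f+1)
            (fun p => 1 <= (p - e) mod (2*e - (2*f+1)) <= e - f - 1)).
   + intros n p q [-> | ->] Hp Hq Hpq Hne.
     * apply (opp1 (2*e - (2*f+1)) e f (p - e) (q - e) 0); try lia.
       apply mod_nz; lia.
     * apply (opp1 (2*e - (2*f+1)) e f (p - e) (q - e) (-1)); try lia.
       apply mod_nz; lia.
   + intros n p [-> | ->] Hp.
     * replace (p + 2*e - 2*e) with p by lia. tauto.
     * replace (p + 2 * e - (2 * f + 1) - e) with ((p - e) + 1*(2*e - (2*f+1))) by lia.
       rewrite Z_mod_plus_full. tauto.
   + intros u [-> | ->]; eexists; split; try reflexivity; auto.
 - intros Hc.
   assert (Hee: e = 2*f+1) by lia.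
   apply (skel (2*e) (fun n => n = 2*e \/ n = e \/ n = 0)
            (fun p => p = 0 \/ 1 <= p mod e <= f)).
   + intros n p q Hn Hp Hq Hpq Hne.
     destruct (Z.eq_dec p 0) as [->|Hp0].
     { assert (Hq0: q mod e = 0).
       { destruct Hn as [-> | [-> | ->]]; try lia.
         - replace q with (0 + 2*e) by lia. rewrite Z_mod_plus_full. apply Z.mod_0_l; lia.
         - replace q with (0 + 1*e) by lia. rewrite Z_mod_plus_full. apply Z.mod_0_l; lia. }
       rewrite Hq0. lia. }
     destruct (Z.eq_dec q 0) as [->|Hq0].
     { assert (Hp1: p mod e = 0).
       { destruct Hn as [-> | [-> | ->]]; try lia.
         - replace p with (0 + 2*e) by lia. rewrite Z_mod_plus_full. apply Z.mod_0_l; lia.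
         - replace p with (0 + 1*e) by lia. rewrite Z_mod_plus_full. apply Z.mod_0_l; lia. }
       rewrite Hp1. lia. }
     destruct Hn as [-> | [-> | ->]]; try lia.
     * apply (opp2 e f p q 2); try lia.
       intro Hm. apply Z.mod_divide in Hm; [|lia]. destruct Hm as [k ->].
       destruct (Z.lt_trichotomy k 1) as [Hk|[Hk|Hk]]; nia.
     * apply (opp2 e f p q 1); try lia.
       intro Hm. apply Z.mod_divide in Hm; [|lia]. destruct Hm as [k ->].
       destruct (Z.lt_trichotomy k 1) as [Hk|[Hk|Hk]]; nia.
   + intros n p Hn Hp.
     destruct Hn as [-> | [-> | ->]].
     * replace (p + 2*e - 2*e) with p by lia. tauto.
     * replace (p + 2 * e - e) with (p + 1*e) by lia.
       rewrite Z_mod_plus_full. split; intros [H|H]; try lia; right; exact H.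
     * replace (p + 2 * e - 0) with (p + 2*e) by lia.
       rewrite Z_mod_plus_full. split; intros [H|H]; try lia; right; exact H.
   + intros u [-> | [-> | ->]]; eexists; split;
       try reflexivity; auto.
Qed.
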